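(* Assume that for every periodic sequence $X$ of positive reals with some period $L$, and every $c\in[0,1]$, the limit $F_X(c):=\lim_{k\to\infty}F_X(k,c)$ exists and $c\mapsto F_X(c)$ is continuous on $[0,1]$. Then for every $M\in\mathbb{R}$ there exist $c>0$ and an integer $d>1$ such that $F_{X_d}(c)>M$.
   Context: For a sequence $X=(x_i)$ of positive reals and $1\le k\le n$, $S(X,n,k):=\binom{n}{k}^{-1}\sum_{1\le i_1<\cdots<i_k\le n}x_{i_1}\cdots x_{i_k}$. For $X$ periodic with period $L$: $F_X(k,c):=S(X,kL,\lceil ckL\rceil)^{1/\lceil ckL\rceil}$ for $c\in(0,1]$ and $F_X(k,0):=(x_1+\cdots+x_L)/L$. Let $P_{GK}(k)=\log_2\left(1+\frac{1}{k(k+2)}\right)$. For an integer $d>1$, $X_d$ is the periodic sequence of period $10d^2$ whose first $10d^2$ entries consist, for each $k\in\{2,\ldots,d\}$, of exactly $\lfloor P_{GK}(k)\cdot 10d^2\rfloor$ entries equal to $k$, with all remaining entries equal to $1$ (in any order; $F_{X_d}(k,c)$ does not depend on the order). *)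

(* Defs.v *)
From HB Require Import structures.
From mathcomp Require Import all_boot all_order all_algebra.
From mathcomp Require Import all_classical all_reals all_analysis.
Set Implicit Arguments. Unset Strict Implicit. Unset Printing Implicit Defensive.
Import Order.TTheory GRing.Theory Num.Theory.
Import numFieldNormedType.Exports.
Local Open Scope ring_scope.

(* Sequences are 0-indexed: x_1, x_2, ... of the paper is X 0, X 1, ... *)

Definition Ssym (R : realType) (X : nat -> R) (n k : nat) : R :=
  ('C(n, k)%:R)^-1 *
  \sum_(A : {set 'I_n} | #|A| == k) \prod_(i in A) X (nat_of_ord i).

Definition Fk (R : realType) (X : nat -> R) (L k : nat) (c : R) : R :=
  if c == 0 then (\sum_(i < L) X i) / L%:R
  else let m := `|Num.ceil (c * (k * L)%:R)|%N in
       Ssym X (k * L) m `^ (m%:R^-1).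

Definition periodic_pos (R : realType) (X : nat -> R) (L : nat) : Prop :=
  (0 < L)%N /\ (forall i, X (i + L)%N = X i) /\ (forall i, 0 < X i).

Definition PGK (R : realType) (k : nat) : R :=
  ln (1 + ((k * (k + 2))%:R)^-1) / ln 2.

Definition period_d (d : nat) : nat := (10 * d ^ 2)%N.

Definition count_d (R : realType) (d k : nat) : nat :=
  `|Num.floor (PGK R k * (period_d d)%:R)|%N.

(* First period of X_d: for k = 2..d, count_d d k copies of k, then 1's. *)
Definition block_d (R : realType) (d : nat) : seq R :=
  flatten [seq nseq (count_d R d k) (k%:R : R) | k <- iota 2 d.-1].

Definition Xd (R : realType) (d : nat) : nat -> R :=
  fun i => nth 1 (block_d R d) (i %% period_d d).

(* Main.v *)
Require Import Defs.
From HB Require Import structures.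
From mathcomp Require Import all_boot all_order all_algebra.
From mathcomp Require Import all_classical all_reals all_analysis.
From mathcomp Require Import ring lra zify.
Import Order.TTheory GRing.Theory Num.Theory.
Import numFieldNormedType.Exports.
Local Open Scope ring_scope.


Ltac side := repeat match goal with
  | |- is_true (_ && _) => apply/andP; split
  | |- _ /\ _ => split end; try (apply: lt0r_neq0); nra.

Section Aux.
Variable R : realType.

Lemma ln_lb (z : R) : 0 < z -> 1 - z^-1 <= ln z.
Proof.
move=> z0.
have h := @le_ln1Dx R (z^-1 - 1).
have zi : 0 < z^-1 by rewrite invr_gt0.
have : -1 < z^-1 - 1 by lra.
move/h; rewrite addrC subrK lnV ?posrE //.
by move=> H; lra.
Qed.

Lemma ln2_ge : 1/2 <= ln (2:R).
Proof. have := @ln_lb 2 (ltr0Sn _ 1). lra. Qed.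

Lemma ln2_le : ln (2:R) <= 1.
Proof. have := @le_ln1Dx R 1. rewrite (_ : 1 + 1 = 2) //. apply; lra. Qed.


Lemma PGK_eq (k : nat) : PGK R k = ln (1 + ((k%:R * (k%:R + 2))^-1)) / ln 2.
Proof. by rewrite /PGK natrM natrD. Qed.

Lemma ln2_gt0 : 0 < ln (2:R).
Proof. have := ln2_ge; lra. Qed.

Lemma PGK_ge0 (k : nat) : (0 < k)%N -> 0 <= PGK R k.
Proof.
move=> k0; rewrite PGK_eq; apply: divr_ge0; last exact: ltW ln2_gt0.
apply: ln_ge0; rewrite lerDl invr_ge0; apply: mulr_ge0 => //; exact: addr_ge0.
Qed.

Lemma PGK_le (k : nat) : (0 < k)%N -> PGK R k <= 2 * (k%:R^-1 - k.+1%:R^-1).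
Proof.
move=> k0; rewrite PGK_eq.
have a1 : 1 <= (k%:R : R) by rewrite ler1n.
set a := (k%:R : R) in a1 *.
have e : k.+1%:R = a + 1 :> R by rewrite -natr1.
rewrite e.
have y0 : 0 < (a * (a + 2)) by apply: mulr_gt0; lra.
have hy := @le_ln1Dx R (a * (a+2))^-1.
have yi : 0 < (a * (a + 2))^-1 by rewrite invr_gt0.
have := hy ltac:(lra) => {}hy.
have l0 : 0 <= ln (1 + (a * (a + 2))^-1) by apply: ln_ge0; lra.
have l2 := ln2_ge.
have step1 : ln (1 + (a * (a + 2))^-1) / ln 2 <= 2 * ln (1 + (a * (a + 2))^-1).
  rewrite ler_pdivrMr ?ln2_gt0 //. nra.
have step2 : (a * (a + 2))^-1 <= a^-1 - (a+1)^-1.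
  have -> : a^-1 - (a+1)^-1 = (a * (a+1))^-1 by field; side.
  rewrite lef_pV2 ?posrE; [nra| nra| nra].
lra.
Qed.

Lemma PGK_lb (k : nat) : (0 < k)%N ->
  (ln (k.+2%:R) - ln (k.+1%:R)) / 2 <= k%:R * PGK R k.
Proof.
move=> k0; rewrite PGK_eq.
have a1 : 1 <= (k%:R : R) by rewrite ler1n.
set a := (k%:R : R) in a1 *.
have e1 : k.+1%:R = a + 1 :> R by rewrite -natr1.
have e2 : k.+2%:R = a + 2 :> R by rewrite -natr1 e1; ring.
rewrite e1 e2.
have y0 : 0 < (a * (a + 2)) by apply: mulr_gt0; lra.
have yi : 0 < (a * (a + 2))^-1 by rewrite invr_gt0.
have l0 : 0 <= ln (1 + (a * (a + 2))^-1) by apply: ln_ge0; lra.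
have hl := @ln_lb (1 + (a * (a + 2))^-1) ltac:(lra).
have e3 : 1 - (1 + (a * (a + 2))^-1)^-1 = ((a+1)^+2)^-1.
  by field; side.
rewrite e3 in hl.
have hd : ln (a + 2) - ln (a + 1) <= (a+1)^-1.
  rewrite -ln_div ?posrE; [|lra|lra].
  have -> : (a + 2) / (a + 1) = 1 + (a+1)^-1 by field; side.
  apply: le_ln1Dx. have : 0 < (a+1)^-1 by rewrite invr_gt0; lra. lra.
have l2 := ln2_le. have l2' := ln2_gt0.
have s1 : a * ln (1 + (a * (a + 2))^-1) <= a * (ln (1 + (a * (a + 2))^-1) / ln 2).
  apply: ler_wpM2l; first lra.
  rewrite ler_pdivlMr //. nra.
have s2 : (a+1)^-1 / 2 <= a * ((a + 1) ^+ 2)^-1.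
  have -> : a * ((a + 1) ^+ 2)^-1 = (a / (a+1)) * (a+1)^-1 by field; side.
  have ai : 0 < (a+1)^-1 by rewrite invr_gt0; lra.
  have : 1/2 <= a / (a+1) by rewrite ler_pdivlMr; lra.
  nra.
nra.
Qed.

End Aux.


Section Aux2.
Variable R : realType.

Lemma block_pos d : all (fun x : R => 0 < x) (block_d R d).
Proof.
apply/allP => x /flattenP [s /mapP [k hk ->]] /nseqP [-> _].
move: hk; rewrite mem_iota => /andP[k2 _].
rewrite ltr0n; by case: k k2.
Qed.

Lemma Xd_pos d i : 0 < Xd R d i.
Proof.
rewrite /Xd; set j := (i %% _)%N.
case: (ltnP j (size (block_d R d))) => hj.
  by apply: (allP (block_pos d)); apply: mem_nth.
by rewrite nth_default.
Qed.

Lemma Xd_periodic d : (0 < d)%N -> periodic_pos (Xd R d) (period_d d).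
Proof.
move=> d0; split; first by rewrite /period_d muln_gt0 expn_gt0 d0.
split; last exact: Xd_pos.
by move=> i; rewrite /Xd modnDr.
Qed.

Lemma sum_block d : \sum_(x <- block_d R d) x =
  \sum_(k <- iota 2 d.-1) (count_d R d k)%:R * k%:R.
Proof.
rewrite /block_d big_flatten big_map; apply: eq_bigr => k _.
by rewrite big_nseq iter_addr addr0 mulr_natl.
Qed.

Lemma size_block d : (size (block_d R d))%:R =
  \sum_(k <- iota 2 d.-1) (count_d R d k)%:R :> R.
Proof.
rewrite /block_d size_flatten sumnE natr_sum /shape -map_comp big_map.
by apply: eq_bigr => k _ /=; rewrite size_nseq.
Qed.

Lemma sum_nth (s : seq R) L : (size s <= L)%N -> all (fun x => 0 <= x) s ->
  \sum_(x <- s) x <= \sum_(i < L) nth 1 s i.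
Proof.
move=> hL hs; rewrite (big_nth 1) -(big_mkord xpredT (fun i => nth 1 s i)).
rewrite (@big_cat_nat _ _ _ (size s) 0 L _ _ (leq0n _) hL) /= lerDl.
apply: sumr_ge0 => i _; case: (ltnP i (size s)) => hi.
  by apply: (allP hs); apply: mem_nth.
by rewrite nth_default.
Qed.

Lemma count_bounds d k : (0 < k)%N ->
  PGK R k * (period_d d)%:R - 1 <= (count_d R d k)%:R <= PGK R k * (period_d d)%:R.
Proof.
move=> k0; have h0 : 0 <= PGK R k * (period_d d)%:R by apply: mulr_ge0; [exact: PGK_ge0|].
have := trunc_itv h0; rewrite trunc_floor h0 /count_d => /andP[a b].
apply/andP; split => //.
move: b; rewrite -natr1; lra.
Qed.


Lemma tel1 n : \sum_(2 <= k < n.+3) PGK R k <= 1.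
Proof.
apply: (@le_trans _ _ (\sum_(2 <= k < n.+3) 2 * ((k%:R : R)^-1 - k.+1%:R^-1))).
  by apply: ler_sum_nat => k /andP[k2 _]; apply: PGK_le; case: k k2.
rewrite -mulr_sumr.
have -> : \sum_(2 <= k < n.+3) ((k%:R : R)^-1 - k.+1%:R^-1) =
          \sum_(2 <= k < n.+3) ((- k.+1%:R^-1) - (- (k%:R : R)^-1)).
  by apply: eq_bigr => k _; ring.
rewrite (telescope_sumr (fun k => - (k%:R : R)^-1)) //.
have : 0 <= (n.+3%:R : R)^-1 by rewrite invr_ge0.
have -> : (2%:R : R)^-1 = 1/2 by rewrite div1r.
set x := n.+3%:R^-1; move=> ?; rewrite opprK mulrDr mulrN mulrCA mulrV ?mulr1; [lra|by rewrite unitfE].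
Qed.

Lemma tel2 n : (ln (n.+4%:R) - ln 3) / 2 <= \sum_(2 <= k < n.+3) k%:R * PGK R k.
Proof.
apply: (@le_trans _ _ (\sum_(2 <= k < n.+3) (ln (k.+2%:R : R) - ln (k.+1%:R)) / 2)).
  have -> : \sum_(2 <= k < n.+3) (ln (k.+2%:R : R) - ln (k.+1%:R)) / 2 =
            \sum_(2 <= k < n.+3) (ln (k.+2%:R : R) / 2 - ln (k.+1%:R) / 2).
    by apply: eq_bigr => k _; ring.
  by rewrite (telescope_sumr (fun k => ln (k.+1%:R : R) / 2)) //; lra.
by apply: ler_sum_nat => k /andP[k2 _]; apply: PGK_lb; case: k k2.
Qed.

Lemma mean_lb n : (ln (n.+4%:R) - ln 3) / 2 - 1 <=
  (\sum_(i < period_d n.+2) Xd R n.+2 i) / (period_d n.+2)%:R.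
Proof.
set L := period_d n.+2; set s := block_d R n.+2.
have L0 : (0 < L)%N by rewrite /L /period_d muln_gt0 expn_gt0.
have L0' : 0 < (L%:R : R) by rewrite ltr0n.
have It : forall F : nat -> R, \sum_(k <- iota 2 (n.+2).-1) F k = \sum_(2 <= k < n.+3) F k by [].
have cb : forall k, (2 <= k < n.+3)%N ->
  PGK R k * L%:R - 1 <= (count_d R n.+2 k)%:R <= PGK R k * L%:R.
  by move=> k /andP[k2 _]; apply: count_bounds; case: k k2.
have hsz : (size s <= L)%N.
  rewrite -(ler_nat R) size_block It.
  apply: (@le_trans _ _ (\sum_(2 <= k < n.+3) PGK R k * L%:R)).
    by apply: ler_sum_nat => k hk; case/andP: (cb k hk).
  rewrite -mulr_suml; have := tel1 n; nra.
have hX : \sum_(i < L) Xd R n.+2 i = \sum_(i < L) nth 1 s i.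
  by apply: eq_bigr => i _; rewrite /Xd modn_small.
have hs : all (fun x : R => 0 <= x) s.
  by apply/allP => x hx; apply: ltW; apply: (allP (block_pos n.+2)).
have h1 := @sum_nth s L hsz hs.
rewrite sum_block It in h1.
have h2 : \sum_(2 <= k < n.+3) (PGK R k * L%:R - 1) * k%:R <=
          \sum_(2 <= k < n.+3) (count_d R n.+2 k)%:R * k%:R.
  apply: ler_sum_nat => k hk; apply: ler_wpM2r => //; by case/andP: (cb k hk).
have h3 : \sum_(2 <= k < n.+3) (PGK R k * L%:R - 1) * k%:R =
   L%:R * \sum_(2 <= k < n.+3) k%:R * PGK R k - \sum_(2 <= k < n.+3) (k%:R : R).
  rewrite mulr_sumr -sumrB; apply: eq_bigr => k _; ring.
have h4 : \sum_(2 <= k < n.+3) (k%:R : R) <= n.+1%:R * n.+2%:R.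
  apply: (@le_trans _ _ (\sum_(2 <= k < n.+3) (n.+2%:R : R))).
    by apply: ler_sum_nat => k /andP[_ hk]; rewrite ler_nat.
  by rewrite sumr_const_nat mulr_natl.
have h5 : n.+1%:R * n.+2%:R <= (L%:R : R).
  rewrite -natrM ler_nat /L /period_d; rewrite expnS expn1; nia.
have T := tel2 n.
rewrite hX ler_pdivlMr //.
set A := \sum_(2 <= k < n.+3) k%:R * PGK R k in h3 T *.
nra.
Qed.

End Aux2.

Local Open Scope classical_set_scope.

Theorem lemma5p4 (R : realType) :
  (forall (X : nat -> R) (L : nat), periodic_pos X L ->
     exists Flim : R -> R,
       (forall c : R, 0 <= c <= 1 -> (fun k => Fk X L k c) @ \oo --> Flim c) /\
       {within `[0, 1], continuous Flim}) ->
  forall M : R, exists (c : R) (d : nat),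
    0 < c <= 1 /\ (1 < d)%N /\
    exists l : R, (fun k => Fk (Xd R d) (period_d d) k c) @ \oo --> l /\ M < l.
Proof.
move=> H M.
set B := 2 * (M + 2) + ln 3.
set n := Num.trunc (expR B).
have hn : expR B < n.+1%:R.
  by have /andP[_ ->] := trunc_itv (ltW (expR_gt0 B)).
have hB : B < ln (n.+4%:R : R).
  rewrite -[X in X < _]expRK ltr_ln; last 2 first.
  - by rewrite posrE expR_gt0.
  - by rewrite posrE ltr0n.
  apply: (lt_le_trans hn); rewrite ler_nat; lia.
have [Flim [Hc Hcont]] := H _ _ (@Xd_periodic R n.+2 isT).
set mean := (\sum_(i < period_d n.+2) Xd R n.+2 i) / (period_d n.+2)%:R.
have hm : M + 1 <= mean.
  have := mean_lb R n; rewrite -/mean /B in hB *; lra.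
have hF0 : Flim 0 = mean.
  have h0 := Hc 0 ltac:(by rewrite lexx ler01).
  have e : (fun k => Fk (Xd R n.+2) (period_d n.+2) k 0) = (fun _ => mean).
    by apply: funext => k; rewrite /Fk eqxx.
  rewrite e in h0.
  exact: (cvg_unique _ h0 (cvg_cst mean)).
have [_ hr _] := (continuous_within_itvP Flim (@ltr01 R)).1 Hcont.
have hev : \forall x \near 0^'+, (0 < x /\ x < 1) /\ M < Flim x.
  near=> x; split; [split|].
  - near: x; exact: nbhs_right_gt.
  - near: x; exact: nbhs_right_lt.
  - near: x; apply: (cvgr_gt _ hr); lra.
have [c [[c0 c1] hc]] := filter_ex hev.
exists c, n.+2; split; first by rewrite c0 ltW.
split => //.
exists (Flim c); split => //.
by apply: Hc; rewrite !ltW.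
Unshelve. all: end_near.
Qed.
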